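(* Let $n,m$ be positive integers. Consider the map sending $f\in\mathcal{A}([n];m)$ (a $P$-partition of the $n$-element antichain with $|f(i)|\le m$ for all $i$) to the following sequence of card placements of a lazy $m$-shelf shuffler: for $i=1,2,\ldots,n$ in turn, card $i$ is placed on shelf $|f(i)|$, on top of the cards already on that shelf if $f(i)$ is barred, and below the cards already on that shelf if $f(i)$ is unbarred. This map is a bijection between $\mathcal{A}([n];m)$ and the set of outcomes (sequences of card placements) of the lazy $m$-shelf shuffler, and the resulting order of the deck from top to bottom is $\pi(f)(1),\pi(f)(2),\ldots,\pi(f)(n)$, where $\pi(f)$ is the sorting permutation of $f$.
   Context: Integers are written $\ldots,\bar 2,\bar 1,0,1,2,\ldots$ with $\bar i=-i$, totally ordered by $0<_{\mathbb Z}\bar1<_{\mathbb Z}1<_{\mathbb Z}\bar2<_{\mathbb Z}2<_{\mathbb Z}\cdots$, and $|\bar j|=j$. A $P$-partition of the antichain $[n]$ (no relations) is any function $f:[n]\to\mathbb Z$; $\mathcal{A}([n];m)$ is the set of such $f$ with $|f(i)|\le m$ for all $i$. The sorting permutation $\pi=\pi(f)\in S_n$ is the unique permutation (viewed as the total order $\pi(1)<_\pi\cdots<_\pi\pi(n)$) such that: if $f(i)<_{\mathbb Z}f(j)$ then $i<_\pi j$; if $i<j$ and $f(i)=f(j)\in\{0,1,2,\ldots\}$ then $i<_\pi j$; if $i<j$ and $f(i)=f(j)\in\{\bar1,\bar2,\ldots\}$ then $j<_\pi i$. Lazy $m$-shelf shuffler: a deck with cards labeled $1,\ldots,n$ from top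 to bottom; cards are taken in order $1,2,\ldots,n$; each card is placed either on shelf $0$ (always below the cards already there) or on one of shelves $1,\ldots,m$, either on top of or below the cards already there (so there are $2m+1$ choices per card). At the end the piles are stacked with shelf $0$ on top, then shelf $1$, ..., shelf $m$ at the bottom. An outcome is the sequence of choices made for cards $1,\ldots,n$. *)

(* Defs.v *)
From mathcomp Require Import all_boot all_order all_algebra all_fingroup.
Set Implicit Arguments. Unset Strict Implicit. Unset Printing Implicit Defensive.
Import Order.TTheory GRing.Theory Num.Theory.

(* Cards / elements of [n] are represented by 'I_n (label k+1 <-> ordinal k).
   A (barred) integer is an int: i >= 0 is unbarred i, -i (i>0) is \bar i. *)

(* Position of x in the order 0 < \bar1 < 1 < \bar2 < 2 < ... *)
Definition zkey (x : int) : nat := (2 * `|x| - (x < 0)%R)%N.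
Definition zlt (x y : int) : bool := (zkey x < zkey y)%N.

Definition barred (x : int) : bool := (x < 0)%R.

Definition inA (n m : nat) (f : {ffun 'I_n -> int}) : Prop :=
  forall i, (`|f i| <= m)%N.

(* i <_pi j, for pi viewed as the total order pi(1) < ... < pi(n) *)
Definition before (n : nat) (pi : 'S_n) (i j : 'I_n) : bool :=
  ((pi^-1)%g i < (pi^-1)%g j)%N.

Definition is_sorting_perm (n : nat) (f : {ffun 'I_n -> int}) (pi : 'S_n) : Prop :=
  forall i j : 'I_n,
    (zlt (f i) (f j) -> before pi i j) /\
    ((i < j)%N -> f i = f j -> ~~ barred (f i) -> before pi i j) /\
    ((i < j)%N -> f i = f j -> barred (f i) -> before pi j i).

(* A choice for one card: (shelf number, placed on top?) *)
Definition choice := (nat * bool)%type.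

Definition valid_outcome (n m : nat) (o : {ffun 'I_n -> choice}) : Prop :=
  forall i, ((o i).1 <= m)%N /\ ((o i).1 = 0%N -> (o i).2 = false).

Definition place (n : nat) (sh : nat -> seq 'I_n) (c : 'I_n) (ch : choice)
  : nat -> seq 'I_n :=
  fun s => if s == ch.1 then (if ch.2 then c :: sh s else rcons (sh s) c)
           else sh s.

Definition shelves (n : nat) (o : {ffun 'I_n -> choice}) : nat -> seq 'I_n :=
  foldl (fun sh c => place sh c (o c)) (fun _ => [::]) (enum 'I_n).

(* final deck, top to bottom: shelf 0, shelf 1, ..., shelf m *)
Definition deck (n m : nat) (o : {ffun 'I_n -> choice}) : seq 'I_n :=
  flatten [seq shelves o s | s <- iota 0 m.+1].

Definition to_outcome (n : nat) (f : {ffun 'I_n -> int}) : {ffun 'I_n -> choice} :=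
  [ffun i => (`|f i|%N, barred (f i))].

(* Main.v *)
Require Import Defs.
From mathcomp Require Import all_boot all_order all_algebra all_fingroup.
From mathcomp Require Import zify.
Import Order.TTheory GRing.Theory Num.Theory.
Set Implicit Arguments. Unset Strict Implicit.

Lemma zkP a : zkey (Posz a) = a.*2. Proof. rewrite /zkey /=. lia. Qed.
Lemma zkN a : zkey (Negz a) = a.*2.+1. Proof. rewrite /zkey /=. lia. Qed.

Lemma zk_inj x y : zkey x = zkey y -> x = y.
Proof.
case: x => a; case: y => b; rewrite ?zkP ?zkN => h.
- by congr Posz; lia.
- exfalso; lia.
- exfalso; lia.
- by congr Negz; lia.
Qed.

Lemma zk_abs x y : (`|x| < `|y|)%N -> (zkey x < zkey y)%N.
Proof. case: x => a; case: y => b; rewrite ?zkP ?zkN /= => h; lia. Qed.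

Lemma keylt a b c d N : (a < b -> c <= N -> a * N.+1 + c < b * N.+1 + d)%N.
Proof. move=> h1 h2. nia. Qed.

Lemma pw_rev (T : Type) (r : rel T) s :
  pairwise r (rev s) = pairwise (fun x y => r y x) s.
Proof.
elim: s => [//|x s IH]; rewrite rev_cons pairwise_rcons IH /= all_rev.
by rewrite andbC.
Qed.

Section Main.
Variables (n : nat) (x0 : 'I_n) (f : {ffun 'I_n -> int}).

Definition sec (i : 'I_n) : nat := if barred (f i) then (n - i)%N else i.
Definition K (i : 'I_n) : nat := (zkey (f i) * n.+1 + sec i)%N.
Definition ltK (i j : 'I_n) : bool := (K i < K j)%N.

Lemma sec_le i : (sec i <= n)%N.
Proof. rewrite /sec; case: ifP => _; first exact: leq_subr. exact: ltnW. Qed.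

Lemma K_zlt i j : (zkey (f i) < zkey (f j))%N -> ltK i j.
Proof. move=> h; exact: keylt h (sec_le i). Qed.

Lemma K_inj : injective K.
Proof.
move=> i j h; case: (ltngtP (zkey (f i)) (zkey (f j))) => [l|l|e].
- by have := K_zlt l; rewrite /ltK h ltnn.
- by have := K_zlt l; rewrite /ltK h ltnn.
- have fe := zk_inj e; move: h; rewrite /K e /sec fe => /addnI.
  have := ltn_ord i; have := ltn_ord j.
  case: ifP => _ h1 h2 h3; apply/ord_inj; move: h3; have := ltn_ord i; have := ltn_ord j; lia.
Qed.

Lemma ltK_irr : irreflexive ltK.
Proof. by move=> i; rewrite /ltK ltnn. Qed.

Lemma ltK_trans : transitive ltK.
Proof. move=> j i k; rewrite /ltK; exact: ltn_trans. Qed.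

Lemma sorting_iff (pi : 'S_n) :
  is_sorting_perm f pi <-> (forall i j, ltK i j -> before pi i j).
Proof.
split=> H i j.
- move=> l; case: (ltngtP (zkey (f i)) (zkey (f j))) => [z|z|z].
  + exact: (H i j).1 z.
  + by have := K_zlt z; move: l; rewrite /ltK => l l'; move: (ltn_trans l l'); rewrite ltnn.
  + have fe := zk_inj z; move: l; rewrite /ltK /K z /sec fe ltn_add2l.
    have := ltn_ord i; have := ltn_ord j.
    case: ifP => b hj hi l.
    * by apply: (H j i).2.2; [lia | rewrite fe | rewrite b].
    * by apply: (H i j).2.1 => //; rewrite fe b.
- split; first by move=> /K_zlt; exact: H.
  split => lij fe b; apply: H; rewrite /ltK /K /sec -fe ?b ?(negbTE b) ltn_add2l;
  have := ltn_ord i; have := ltn_ord j; lia.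
Qed.

Lemma pw_enum (r : rel 'I_n) :
  pairwise r (enum 'I_n) <-> (forall k l : 'I_n, (k < l)%N -> r k l).
Proof.
split.
- move=> /(pairwiseP x0) H k l kl.
  have := H k l; rewrite !nth_ord_enum; apply;
  by rewrite ?unfold_in /= ?size_enum_ord ?ltn_ord.
- move=> H; apply/(pairwiseP x0) => a b; rewrite ?unfold_in /= !size_enum_ord => ha hb ab.
  have ea : nth x0 (enum 'I_n) a = Ordinal ha by apply: val_inj; rewrite /= nth_enum_ord.
  have eb : nth x0 (enum 'I_n) b = Ordinal hb by apply: val_inj; rewrite /= nth_enum_ord.
  by rewrite ea eb; apply: H.
Qed.

Lemma perm_iff (pi : 'S_n) :
  (forall i j, ltK i j -> before pi i j) <-> pairwise ltK [seq pi i | i <- enum 'I_n].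
Proof.
rewrite pairwise_map; split.
- move=> H; apply/pw_enum => k l kl /=.
  case: (ltngtP (K (pi k)) (K (pi l))) => [//|c|c].
  + by have := H _ _ c; rewrite /before !permK => lk; move: (ltn_trans kl lk); rewrite ltnn.
  + have := perm_inj (K_inj c) => e; by move: kl; rewrite e ltnn.
- move/pw_enum => H i j l; rewrite /before.
  case: (ltngtP ((pi^-1)%g i) ((pi^-1)%g j)) => [//|c|c].
  + have := H _ _ c; rewrite /= !permKV => l'.
    by move: (ltn_trans l l'); rewrite ltnn.
  + have e : (pi^-1)%g i = (pi^-1)%g j by apply: val_inj.
    have := congr1 pi e; rewrite !permKV => ij; by move: l; rewrite ij ltK_irr.
Qed.

Lemma shelves_gen (o : {ffun 'I_n -> choice}) l s :
  foldl (fun sh c => place sh c (o c)) (fun _ => [::]) l s =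
  rev [seq c <- l | o c == (s, true)] ++ [seq c <- l | o c == (s, false)].
Proof.
elim/last_ind: l s => [//|l c IH] s.
rewrite foldl_rcons /place IH !filter_rcons.
case: (o c) => s' b /=; rewrite !xpair_eqE.
case: (s =P s') => [<-|ne]; last first.
  by rewrite !(eq_sym s') (introF eqP ne).
by case: b; rewrite eqxx /= ?rev_rcons ?rcons_cat.
Qed.

Definition B (s : nat) : seq 'I_n :=
  rev [seq c <- enum 'I_n | (`|f c| == s)%N && barred (f c)] ++
  [seq c <- enum 'I_n | (`|f c| == s)%N && ~~ barred (f c)].

Lemma deckE m : deck m (to_outcome f) = flatten [seq B s | s <- iota 0 m.+1].
Proof.
rewrite /deck; congr flatten; apply: eq_map => s.
rewrite /shelves shelves_gen /B; congr (rev _ ++ _); apply: eq_filter => c;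
by rewrite ffunE xpair_eqE ?eqb_id ?eqbF_neg.
Qed.

Lemma pw_ltn : pairwise (fun x y : 'I_n => (x < y)%N) (enum 'I_n).
Proof. by apply/pw_enum. Qed.

Lemma B_pw s : pairwise ltK (B s).
Proof.
rewrite /B pairwise_cat pw_rev; apply/and3P; split.
- apply/allrelP => c d; rewrite mem_rev !mem_filter => /andP[/andP[ec bc] _] /andP[/andP[ed bd] _].
  apply: K_zlt; move: ec bc ed bd; case: (f c) => a; case: (f d) => b //=;
  rewrite ?zkP ?zkN => /eqP ea _ /eqP eb _; lia.
- apply: (sub_in_pairwise (P := [pred c | (`|f c| == s)%N && barred (f c)])
         (r := fun x y : 'I_n => (x < y)%N)); last 2 first.
  + by rewrite filter_all.
  + exact: pairwise_filter pw_ltn.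
  move=> c d; rewrite !inE /ltK /K /sec.
  case: (f c) => a; case: (f d) => b; rewrite /= ?andbF ?andbT //= => /eqP ea /eqP eb cd.
  have ab : a = b by lia.
  subst b; rewrite zkN ltn_add2l; have := ltn_ord d; lia.
- apply: (sub_in_pairwise (P := [pred c | (`|f c| == s)%N && ~~ barred (f c)])
         (r := fun x y : 'I_n => (x < y)%N)); last 2 first.
  + by rewrite filter_all.
  + exact: pairwise_filter pw_ltn.
  move=> c d; rewrite !inE /ltK /K /sec.
  case: (f c) => a; case: (f d) => b; rewrite /= ?andbF ?andbT //= => /eqP ea /eqP eb cd.
  by subst; rewrite ltn_add2l.
Qed.

Lemma memB c s : c \in B s -> `|f c|%N = s.
Proof.
by rewrite mem_cat mem_rev !mem_filter => /orP[] /andP[/andP[/eqP -> _] _].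
Qed.

Lemma flat_pw a k : pairwise ltK (flatten [seq B s | s <- iota a k]).
Proof.
elim: k a => [//|k IH] a.
rewrite /= pairwise_cat IH B_pw andbT.
rewrite andbT.
apply/allrelP => c d hc /flatten_mapP [t ht hd].
rewrite mem_iota in ht; apply: K_zlt; apply: zk_abs.
rewrite (memB hc) (memB hd); lia.
Qed.

Lemma mem_deck m c : inA m f -> c \in flatten [seq B s | s <- iota 0 m.+1].
Proof.
move=> hf; apply/flatten_mapP; exists `|f c|%N.
  by rewrite mem_iota /= add0n ltnS hf.
rewrite /B mem_cat mem_rev !mem_filter eqxx -enumT mem_enum /=.
by case: (barred (f c)).
Qed.

End Main.

Theorem proposition2p5 (n m : nat) (hn : (0 < n)%N) (hm : (0 < m)%N) :
  (forall f g : {ffun 'I_n -> int},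
     inA m f -> inA m g -> to_outcome f = to_outcome g -> f = g) /\
  (forall f : {ffun 'I_n -> int}, inA m f -> valid_outcome m (to_outcome f)) /\
  (forall o : {ffun 'I_n -> choice},
     valid_outcome m o -> exists2 f, inA m f & to_outcome f = o) /\
  (forall f : {ffun 'I_n -> int}, inA m f -> forall pi : 'S_n,
     is_sorting_perm f pi <-> deck m (to_outcome f) = [seq pi i | i <- enum 'I_n]).
Proof.
have x0 : 'I_n := Ordinal hn.
split.
  move=> f g _ _ E; apply/ffunP => i.
  have := congr1 (fun o : {ffun 'I_n -> choice} => o i) E; rewrite !ffunE.
  by case: (f i) => a; case: (g i) => b //= [->].
split.
  move=> f hf i; rewrite ffunE /=; split; first exact: hf.
  by case: (f i) => a.
split.
  move=> o ho.
  exists [ffun i => if (o i).2 then Negz ((o i).1.-1) else Posz (o i).1].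
    move=> i; rewrite ffunE; case: (ho i); case: (o i) => s [] /= hs h0 //.
    by case: s hs h0 => [|s] //= hs h0; have := h0 erefl.
  apply/ffunP => i; rewrite !ffunE; case: (ho i); case: (o i) => s [] /= hs h0 //.
  by case: s hs h0 => [|s] //= hs h0; have := h0 erefl.
move=> f hf pi; rewrite deckE; split.
- move=> /sorting_iff /perm_iff H.
  apply: (irr_sorted_eq (@ltK_trans n f) (@ltK_irr n f)).
  + by apply: pairwise_sorted; exact: flat_pw.
  + exact: pairwise_sorted (H x0).
  + move=> c; rewrite (mem_deck c hf); symmetry; apply/mapP.
    by exists ((pi^-1)%g c); rewrite ?mem_enum ?permKV.
- move=> E; apply/sorting_iff/(perm_iff x0); rewrite -E; exact: flat_pw.
Qed.
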